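(* Let $n,m\ge1$ and consider the $n\times m$ grid communication graph with a direction assignment $g$ such that adjacent circles have opposite directions. Then there are exactly $\gcd(n,m)$ rings, all of them have the same length, and all of them have the same number of hitting points on each of the four walls (i.e., for each wall, every ring hits that wall the same number of times).
   Context: Grid. The $n\times m$ grid communication graph consists of $nm$ pairwise disjoint unit circles, circle $(i,j)$ in row $i$ (rows horizontal, row 1 on top) and column $j$ (columns vertical, column 1 on the left), centres on a square lattice, circle $(i,j)$ adjacent exactly to the existing circles $(i\pm1,j)$, $(i,j\pm1)$. For adjacent circles $C_i,C_j$, the link position $\phi_{ij}$ is the point of $C_i$ closest to $C_j$. A direction assignment gives each circle $C$ a direction $g(C)\in\{1,-1\}$ (counterclockwise/clockwise), with $g(C_i)=-g(C_j)$ for adjacent circles. Rings. Trace a point moving along a circle $C_i$ in direction $g(C_i)$ at constant speed; whenever it reaches a link position $\phi_{ij}$ of its current circle, it passes to $C_j$ at $\phi_{ji}$ and continues along $C_j$ in direction $g(C_j)$ (this is the motion of a robot that never meets any other robot). This motion is periodic and the closed curve it traces is a ring. Every arc of a circle between consecutive link positions belongs to exactly one ring, so the circles decompose into rings overlapping only at link positions. The length of a ring is the total length of the circle arcs forming it. Walls. A ring hits the top wall (at a circle of row 1) each time it passes through the topmost point of a circle of row 1; similarly for the bottom wall (bottommost points of circles of row $n$), the left wall (leftmost points of circles of column 1) and the right wall (rightmost points of circles of column $m$). The number of hitting points of a ring on a wall is the number of such points on the ring. *)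

(* Defs.v *)
From mathcomp Require Import all_boot.
From Stdlib Require Import Rdefinitions Raxioms RIneq Rtrigo1.
Set Implicit Arguments. Unset Strict Implicit. Unset Printing Implicit Defensive.

(* Circles of the n x m grid: (i, j) with i : 'I_n the row (0 = top row,
   i.e. row 1 of the paper) and j : 'I_m the column (0 = leftmost column).
   Cardinal points of a unit circle: p : 'I_4 stands for the point at angle
   p * pi/2, i.e. 0 = rightmost (east), 1 = topmost (north),
   2 = leftmost (west), 3 = bottommost (south).
   Quarter arc q : 'I_4 of a circle is the arc between angles q*pi/2 and
   (q+1)*pi/2.  Every link position is a cardinal point, so the arcs between
   consecutive link positions are unions of quarter arcs. *)

Definition circle (n m : nat) := ('I_n * 'I_m)%type.

(* A state = a quarter arc of a circle, traversed in the circle's direction. *)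
Definition state (n m : nat) := (circle n m * 'I_4)%type.

Definition nbr (n m : nat) (c : circle n m) (p : 'I_4) : option (circle n m) :=
  match val p with
  | 0 => omap (fun j' : 'I_m => (c.1, j')) (insub (val c.2).+1)
  | 1 => if val c.1 is i'.+1 then omap (fun i'' : 'I_n => (i'', c.2)) (insub i') else None
  | 2 => if val c.2 is j'.+1 then omap (fun j'' : 'I_m => (c.1, j'')) (insub j') else None
  | _ => omap (fun i' : 'I_n => (i', c.2)) (insub (val c.1).+1)
  end.

Definition adjacent (n m : nat) (c c' : circle n m) : Prop :=
  exists p, nbr c p = Some c'.

(* Direction assignment: g c = true means counterclockwise (g(C) = 1),
   false means clockwise (g(C) = -1). *)
Definition proper_direction (n m : nat) (g : circle n m -> bool) : Prop :=
  forall c c', adjacent c c' -> g c <> g c'.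

Definition end_pt (n m : nat) (g : circle n m -> bool) (s : state n m) : 'I_4 :=
  if g s.1 then inord ((val s.2).+1 %% 4) else s.2.

Definition start_quarter (n m : nat) (g : circle n m -> bool) (c : circle n m)
  (p : 'I_4) : 'I_4 :=
  if g c then p else inord ((val p + 3) %% 4).

(* The motion of a robot meeting no other robot, one quarter arc at a time:
   at the end point p, if p is a link position (a neighbour exists in that
   direction) pass to the neighbour at the opposite point, otherwise stay. *)
Definition robot_step (n m : nat) (g : circle n m -> bool) (s : state n m) : state n m :=
  let p := end_pt g s in
  match nbr s.1 p with
  | Some c' => (c', start_quarter g c' (inord ((val p + 2) %% 4)))
  | None => (s.1, start_quarter g s.1 p)
  end.

(* The ring through a state: the (quarter arcs of the) periodic orbit. *)
Definition ring_of (n m : nat) (g : circle n m -> bool) (s : state n m)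
  : {set state n m} :=
  [set t | fconnect (robot_step g) s t].

Definition rings (n m : nat) (g : circle n m -> bool) : {set {set state n m}} :=
  [set ring_of g s | s : state n m].

(* Length of a ring: total length of its arcs; each quarter arc of a unit
   circle has length pi/2. *)
Definition ring_length (n m : nat) (r : {set state n m}) : R :=
  Rmult (INR #|r|) (Rdiv PI (IZR 2)).

Inductive wall := Top | Bottom | LeftW | RightW.

Definition ends_on_wall (n m : nat) (g : circle n m -> bool) (w : wall)
  (s : state n m) : bool :=
  let p := val (end_pt g s) in
  match w with
  | Top => (p == 1) && (val s.1.1 == 0)
  | Bottom => (p == 3) && (val s.1.1 == n.-1)
  | LeftW => (p == 2) && (val s.1.2 == 0)
  | RightW => (p == 0) && (val s.1.2 == m.-1)
  end.

Definition hits (n m : nat) (g : circle n m -> bool) (w : wall)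
  (r : {set state n m}) : nat :=
  #|[set s in r | ends_on_wall g w s]|.

(* Main.v *)
Require Import Defs.
From mathcomp Require Import all_boot zify.
From Stdlib Require Import Rdefinitions.
Set Implicit Arguments. Unset Strict Implicit. Unset Printing Implicit Defensive.

Lemma nbr_some n m (c c' : circle n m) (p : 'I_4) : nbr c p = Some c' ->
  match val p with
  | 0 => val c'.1 = val c.1 /\ val c'.2 = (val c.2).+1
  | 1 => (val c'.1).+1 = val c.1 /\ val c'.2 = val c.2
  | 2 => val c'.1 = val c.1 /\ (val c'.2).+1 = val c.2
  | _ => val c'.1 = (val c.1).+1 /\ val c'.2 = val c.2 end.
Proof.
case: c => [[i Hi] [j Hj]]; case: p => [[|[|[|[|p]]]] Hp] //=; rewrite /nbr /=.
- by case: (insubP 'I_m) => [k _ Hk|] //= [<-] /=.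
- case: i Hi => [|i] Hi //=; by case: (insubP 'I_n) => [k _ Hk|] //= [<-] /=; rewrite Hk.
- case: j Hj => [|j] Hj //=; by case: (insubP 'I_m) => [k _ Hk|] //= [<-] /=; rewrite Hk.
- by case: (insubP 'I_n) => [k _ Hk|] //= [<-] /=.
Qed.

Lemma nbr_none n m (c : circle n m) (p : 'I_4) : nbr c p = None ->
  match val p with
  | 0 => (val c.2).+1 = m
  | 1 => val c.1 = 0
  | 2 => val c.2 = 0
  | _ => (val c.1).+1 = n end.
Proof.
case: c => [[i Hi] [j Hj]]; case: p => [[|[|[|[|p]]]] Hp] //=; rewrite /nbr /=.
- case: (insubP 'I_m) => [k _ Hk|H] //= _; move: H; rewrite -leqNgt; lia.
- case: i Hi => [|i] Hi //=; case: (insubP 'I_n) => [k _ Hk|H] //= _; move: H; rewrite -leqNgt; lia.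
- case: j Hj => [|j] Hj //=; case: (insubP 'I_m) => [k _ Hk|H] //= _; move: H; rewrite -leqNgt; lia.
- case: (insubP 'I_n) => [k _ Hk|H] //= _; move: H; rewrite -leqNgt; lia.
Qed.

Definition encX (m : nat) (b : bool) (q j : nat) : nat :=
 match b, q with
 | true,0 => 4*m-(2*j+2) | true,1 => 4*m-(2*j+1) | true,2 => 2*j | true,_ => 2*j+1
 | false,0 => 2*j+1 | false,1 => 2*j | false,2 => 4*m-(2*j+1) | false,_ => 4*m-(2*j+2) end.
Definition encY (n : nat) (b : bool) (q i : nat) : nat :=
 match b, q with
 | true,0 => 4*n-(2*i+1) | true,1 => 2*i | true,2 => 2*i+1 | true,_ => 4*n-(2*i+2)
 | false,0 => 2*i | false,1 => 4*n-(2*i+1) | false,2 => 4*n-(2*i+2) | false,_ => 2*i+1 end.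

Definition enc n m (g : circle n m -> bool) (s : state n m) : nat * nat :=
  (encX m (g s.1) (val s.2) (val s.1.2), encY n (g s.1) (val s.2) (val s.1.1)).
Definition sm (a x : nat) := if x.+1 == a then 0 else x.+1.
Definition tau (n m : nat) (e : nat * nat) := (sm (4*m) e.1, sm (4*n) e.2).

Lemma g_nbr n m (g : circle n m -> bool) (hg : proper_direction g) c p c' :
  nbr c p = Some c' -> g c' = ~~ g c.
Proof. move=> E; have := hg c c' (ex_intro _ p E); by case: (g c); case: (g c'). Qed.

Lemma vinord k : k < 4 -> val (inord k : 'I_4) = k.
Proof. exact: inordK. Qed.

Lemma enc_step n m (g : circle n m -> bool) (hg : proper_direction g) s :
  enc g (robot_step g s) = tau n m (enc g s).
Proof.
case: s => [[[i Hi] [j Hj]] [[|[|[|[|q]]]] Hq]] //; rewrite /robot_step /end_pt /=;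
case Eb: (g _) => /=; rewrite ?vinord //;
(case E: (nbr _ _) => [c'|];
 [ have := nbr_some E; have gc' := g_nbr hg E; rewrite Eb /= in gc';
   rewrite /enc /start_quarter gc' /=
 | have := nbr_none E; rewrite /enc /start_quarter Eb /= ]).
all: rewrite ?vinord //= ?Eb /tau /sm /=.
all: (move=> [? ?] || move=> ?); congr pair; case: eqP; lia.
Qed.

Lemma enc_inj n m (g : circle n m -> bool) : injective (enc g).
Proof.
move=> [[[i Hi] [j Hj]] [q Hq]] [[[i' Hi'] [j' Hj']] [q' Hq']]; rewrite /enc /=.
case Eb: (g _); case Eb': (g _);
move: Hq Hq'; case: q => [|[|[|[|q]]]] //; case: q' => [|[|[|[|q']]]] //= Hq Hq' [E1 E2];
first [lia | (have ? : i = i' by lia); (have ? : j = j' by lia); subst i' j';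
  rewrite (bool_irrelevance Hi' Hi) (bool_irrelevance Hj' Hj) ?Eb in Eb' *; 
  first [ by rewrite (bool_irrelevance Hq' Hq) | by [] ]].
Qed.

Definition wall_pred (n m : nat) (w : wall) (e : nat * nat) : bool :=
  match w with
  | Top => e.2 == 4*n-1 | Bottom => e.2 == 2*n-1
  | LeftW => e.1 == 4*m-1 | RightW => e.1 == 2*m-1 end.

Lemma wall_enc n m (g : circle n m -> bool) w s :
  ends_on_wall g w s = wall_pred n m w (enc g s).
Proof.
case: s => [[[i Hi] [j Hj]] [[|[|[|[|q]]]] Hq]] //; rewrite /ends_on_wall /end_pt /enc /=;
case Eb: (g _) => /=; rewrite ?vinord //=; case: w => /=; apply/idP/idP; lia.
Qed.

Lemma enc_lt n m (g : circle n m -> bool) s :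
  (enc g s).1 < 4*m /\ (enc g s).2 < 4*n.
Proof.
case: s => [[[i Hi] [j Hj]] [[|[|[|[|q]]]] Hq]] //; rewrite /enc /=;
case Eb: (g _) => /=; lia.
Qed.

Lemma sm_mod a z : 0 < a -> sm a (z %% a) = z.+1 %% a.
Proof.
move=> a0; have -> : z.+1 %% a = (z %% a).+1 %% a by rewrite -[z.+1]addn1 -[(z %% a).+1]addn1 modnDml.
rewrite /sm; have := ltn_pmod z a0; set x := z %% a => xa.
case: eqP => [->|/eqP ne]; first by rewrite modnn.
by rewrite modn_small // ltn_neqAle ne.
Qed.


Lemma enc_iter n m (g : circle n m -> bool) (hg : proper_direction g) s k :
  enc g (iter k (robot_step g) s) =
  (((enc g s).1 + k) %% (4*m), ((enc g s).2 + k) %% (4*n)).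
Proof.
have [h1 h2] := enc_lt g s.
elim: k => [|k IH]; first by rewrite !addn0 !modn_small.
rewrite iterS enc_step // IH /tau /= !sm_mod ?addnS //. all: by [apply: leq_ltn_trans h2 | apply: leq_ltn_trans h1].
Qed.

Lemma sm_small a x : x < a -> sm a x = x.+1 %% a.
Proof. move=> xa; rewrite -{1}(modn_small xa) sm_mod //; lia. Qed.

Lemma step_inj n m (g : circle n m -> bool) (hg : proper_direction g) :
  injective (robot_step g).
Proof.
move=> s t E; apply: (enc_inj (g := g)).
have := congr1 (enc g) E; rewrite !enc_step //.
have := enc_lt g s; have := enc_lt g t.
case: (enc g t) => x' y'; case: (enc g s) => x y /= [b1 b2] [a1 a2].
rewrite /tau /= !sm_small //.
case=> /eqP E1 /eqP E2.
rewrite -[x.+1]addn1 -[x'.+1]addn1 eqn_modDr in E1; rewrite -[y.+1]addn1 -[y'.+1]addn1 eqn_modDr in E2.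
move: E1 E2; rewrite !modn_small // => /eqP -> /eqP -> //.
Qed.

Lemma mod_fix a x k : x < a -> ((x + k) %% a == x) = (a %| k).
Proof.
move=> h; rewrite -{2}(modn_small h) -[x in _ == x %% _]addn0 eqn_modDl mod0n.
by [].
Qed.

Lemma iter_fix n m (g : circle n m -> bool) (hg : proper_direction g) s k :
  (iter k (robot_step g) s == s) = (lcmn (4*m) (4*n) %| k).
Proof.
rewrite dvdn_lcm; apply/eqP/andP.
- move/(congr1 (enc g)); rewrite (enc_iter hg).
  have := enc_lt g s; case: (enc g s) => x y /= [h1 h2] [/eqP E1 /eqP E2].
  by rewrite -(mod_fix _ h1) -(mod_fix _ h2) E1 E2.
- move=> [d1 d2]; apply: (enc_inj (g := g)); rewrite (enc_iter hg).
  have := enc_lt g s; case: (enc g s) => x y /= [h1 h2].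
  by rewrite (eqP (etrans (mod_fix _ h1) d1)) (eqP (etrans (mod_fix _ h2) d2)).
Qed.

Lemma order_L n m (g : circle n m -> bool) (hg : proper_direction g) s :
  order (robot_step g) s = lcmn (4*m) (4*n).
Proof.
set L := lcmn _ _.
have [h1 h2] := enc_lt g s.
have L0 : 0 < L by rewrite lcmn_gt0; apply/andP; split; lia.
have dvd : L %| order (robot_step g) s.
  by rewrite -(iter_fix hg s) iter_order //; apply: step_inj.
apply/eqP; rewrite eqn_leq (dvdn_leq (order_gt0 _ _) dvd) andbT.
rewrite leqNgt; apply/negP => Lo.
have U := orbit_uniq (robot_step g) s.
have := nth_uniq s (i := 0) (j := L) _ _ U.
rewrite /orbit size_traject !nth_traject // => /(_ (order_gt0 _ _) Lo).
have := iter_fix hg s L; rewrite dvdnn => /eqP -> /=.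
rewrite eqxx => /esym /eqP; lia.
Qed.

Lemma traject_iota (T : Type) (f : T -> T) x k :
  traject f x k = [seq iter i f x | i <- iota 0 k].
Proof.
elim: k x => [|k IH] x //=.
rewrite IH -[1]/(1 + 0) iotaDl -map_comp; congr (_ :: _).
by apply: eq_map => i; rewrite /comp /= add0n -iterS iterSr.
Qed.

Lemma count_block q c z : c < q ->
  count (fun k => (z + k) %% q == c) (iota 0 q) = 1.
Proof.
move=> cq; elim: z => [|z IH].
  rewrite (@eq_in_count _ _ (pred1 c)).
    by rewrite (count_uniq_mem _ (iota_uniq 0 q)) mem_iota add0n cq.
  by move=> k; rewrite mem_iota add0n /= => kq; rewrite modn_small.
case: q cq IH => [//|q] cq IH.
have E1 : iota 0 q.+1 = iota 0 q ++ [:: q] by rewrite -addn1 iotaD.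
have E2 : iota 0 q.+1 = 0 :: [seq 1 + i | i <- iota 0 q] by rewrite -iotaDl.
rewrite -[RHS]IH [in LHS]E1 [in RHS]E2 count_cat /= count_map addn0 addnC.
congr (_ + _).
  by rewrite addSn -addnS modnDr addn0.
by apply: eq_count => k /=; rewrite add1n addnS addSn.
Qed.

Lemma count_mul q c z a : c < q ->
  count (fun k => (z + k) %% q == c) (iota 0 (a * q)) = a.
Proof.
move=> cq; elim: a => [|a IH]; first by [].
have E : iota (0 + a * q) q = [seq a * q + i | i <- iota 0 q].
  by rewrite add0n -iotaDl addn0.
rewrite mulSnr iotaD count_cat IH E count_map -addn1 -(count_block (z + a * q) cq).
by congr (_ + _); apply: eq_count => k /=; rewrite addnA.
Qed.

Lemma card_ring n m (g : circle n m -> bool) (hg : proper_direction g) s :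
  #|ring_of g s| = lcmn (4*m) (4*n).
Proof.
rewrite -(order_L hg s) /order /ring_of; apply: eq_card => t; by rewrite inE.
Qed.

Definition hv (n m : nat) (w : wall) :=
  match w with Top | Bottom => lcmn (4*m) (4*n) %/ (4*n)
  | _ => lcmn (4*m) (4*n) %/ (4*m) end.

Lemma hits_ring n m (g : circle n m -> bool) (hg : proper_direction g) w s :
  hits g w (ring_of g s) = hv n m w.
Proof.
rewrite /hits.
have -> : #|[set t in ring_of g s | ends_on_wall g w t]| =
          count (ends_on_wall g w) (orbit (robot_step g) s).
  rewrite -size_filter -(card_uniqP (filter_uniq _ (orbit_uniq _ _))).
  apply: eq_card => t; by rewrite !inE mem_filter -fconnect_orbit andbC.
rewrite /orbit (order_L hg) traject_iota count_map.
have [h1 h2] := enc_lt g s.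
under eq_count => k do rewrite /= wall_enc (enc_iter hg).
set L := lcmn _ _.
have HLn : L = L %/ (4*n) * (4*n) by rewrite divnK // dvdn_lcmr.
have HLm : L = L %/ (4*m) * (4*m) by rewrite divnK // dvdn_lcml.
case: w; rewrite /wall_pred /hv -/L /=.
- by rewrite {1}HLn count_mul //; lia.
- by rewrite {1}HLn count_mul //; lia.
- by rewrite {1}HLm count_mul //; lia.
- by rewrite {1}HLm count_mul //; lia.
Qed.

Lemma rings_part n m (g : circle n m -> bool) (hg : proper_direction g) :
  partition (rings g) [set: state n m].
Proof.
have -> : rings g = equivalence_partition (fconnect (robot_step g)) [set: state n m].
  rewrite /rings /equivalence_partition; apply/setP => A.
  apply/imsetP/imsetP => [[s _ ->]|[s _ ->]]; exists s => //; apply/setP => t; by rewrite !inE.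
apply: equivalence_partitionP => x y z _ _ _; split; first exact: connect0.
move=> Hxy; apply/idP/idP => H.
- rewrite (fconnect_sym (step_inj hg)) in Hxy; exact: connect_trans Hxy H.
- exact: connect_trans Hxy H.
Qed.

Unset Implicit Arguments.

Theorem theorem5 (n m : nat) (hn : 0 < n) (hm : 0 < m)
  (g : circle n m -> bool) (hg : proper_direction g) :
  #|rings g| = gcdn n m /\
  (forall r1 r2, r1 \in rings g -> r2 \in rings g ->
     ring_length r1 = ring_length r2 /\
     (forall w : wall, hits g w r1 = hits g w r2)).
Proof.
have cardr : forall r, r \in rings g -> #|r| = lcmn (4*m) (4*n).
  by move=> r /imsetP[s _ ->]; exact: card_ring.
split.
- have := card_uniform_partition cardr (rings_part hg).
  rewrite cardsT !card_prod !card_ord -muln_lcmr lcmnC => H.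
  have E := muln_lcm_gcd n m.
  have l0 : 0 < lcmn n m by rewrite lcmn_gt0 hn hm.
  nia.
- move=> r1 r2 H1 H2; split; first by rewrite /ring_length (cardr _ H1) (cardr _ H2).
  move=> w; case/imsetP: H1 => s1 _ ->; case/imsetP: H2 => s2 _ ->.
  by rewrite !(hits_ring hg).
Qed.
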